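(* Let $\mathcal{S}$ be a set, $\mathcal{A}$ a finite set and $\boldsymbol\varphi:\mathcal{S}\times\mathcal{A}\to\mathbb{R}^d$ with $\|\boldsymbol\varphi(s,a)\|_2\le1$ for all $(s,a)$. Fix constants $L,B,D,M>0$ and $\lambda>0$. Let $\mathcal{Q}$ be the class of functions $\mathcal{S}\times\mathcal{A}\to\mathbb{R}$ of the form $$Q(\cdot,\cdot)=\Big(\mathbf w^\top\boldsymbol\varphi(\cdot,\cdot)+v+\beta\sqrt{\boldsymbol\varphi(\cdot,\cdot)^\top\Lambda^{-1}\boldsymbol\varphi(\cdot,\cdot)}\Big)\wedge M$$ with $\|\mathbf w\|_2\le L$, $\beta\in[0,B]$, $v\in[0,D]$, and $\Lambda$ a positive definite matrix with $\lambda_{\min}(\Lambda)\ge\lambda$. Let $$\mathcal{V}=\Big\{\max_aQ(\cdot,a):\ Q(\cdot,\cdot)=\textsc{Clip}\big(Q_1(\cdot,\cdot);\,Q_2(\cdot,\cdot)\vee Q_3(\cdot,\cdot),\,Q_4(\cdot,\cdot)\wedge Q_5(\cdot,\cdot)\big),\ Q_1,\dots,Q_5\in\mathcal{Q}\Big\}.$$ Then for every $\varepsilon>0$, $$\log\mathcal{N}_\varepsilon(\mathcal{V},\|\cdot\|_\infty)\le5d\log(1+8L/\varepsilon)+5\log(1+8D/\varepsilon)+5d^2\log\big[1+8d^{1/2}B^2/(\lambda\varepsilon^2)\big].$$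
   Context: $a\vee b=\max\{a,b\}$, $a\wedge b=\min\{a,b\}$ (applied pointwise to functions), $\textsc{Clip}(x;L,U)=(x\vee L)\wedge U$. $\mathcal{N}_\varepsilon(\mathcal{F},\|\cdot\|_\infty)$ denotes the $\varepsilon$-covering number of the function class $\mathcal{F}$ with respect to the distance $\sup_x|f(x)-g(x)|$. *)

(* Defs.v *)
From HB Require Import structures.
From mathcomp Require Import all_boot all_order all_algebra.
From mathcomp Require Import all_classical all_reals.
From mathcomp Require Import exp.
Set Implicit Arguments. Unset Strict Implicit. Unset Printing Implicit Defensive.
Import Order.TTheory GRing.Theory Num.Theory.
Local Open Scope ring_scope.

Section Defs.
Variable R : realType.

Definition norm2 (d : nat) (x : 'cV[R]_d) : R :=
  Num.sqrt (\sum_(i < d) x i ord0 ^+ 2).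

Definition qform (d : nat) (M : 'M[R]_d) (x : 'cV[R]_d) : R :=
  ((x^T *m M *m x) ord0 ord0).

Definition posdef (d : nat) (M : 'M[R]_d) : Prop :=
  M^T = M /\ forall x : 'cV[R]_d, x != 0 -> 0 < qform M x.

Definition lambda_min_ge (d : nat) (M : 'M[R]_d) (lam : R) : Prop :=
  forall a : R, eigenvalue M a -> lam <= a.

Definition clip (x L U : R) : R := Num.min (Num.max x L) U.

Section Fun.
Variables (S : Type) (A : finType) (d : nat) (phi : S -> A -> 'cV[R]_d).

Definition Qfun (M : R) (w : 'cV[R]_d) (v beta : R) (Lam : 'M[R]_d) : S -> A -> R :=
  fun s a => Num.min ((w^T *m phi s a) ord0 ord0 + v
                      + beta * Num.sqrt (qform (invmx Lam) (phi s a))) M.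

Definition Qclass (L B D M lam : R) (Q : S -> A -> R) : Prop :=
  exists (w : 'cV[R]_d) (v beta : R) (Lam : 'M[R]_d),
    [/\ norm2 w <= L, 0 <= beta <= B, 0 <= v <= D,
        (posdef Lam /\ lambda_min_ge Lam lam)
      & Q = Qfun M w v beta Lam].

(* max over the finite nonempty set A (a0 is a witness of nonemptiness;
   the value does not depend on it) *)
Definition maxA (a0 : A) (f : A -> R) : R := \big[Num.max/f a0]_(a : A) f a.

Definition Vclass (a0 : A) (L B D M lam : R) (V : S -> R) : Prop :=
  exists Q1 Q2 Q3 Q4 Q5 : S -> A -> R,
    [/\ Qclass L B D M lam Q1, Qclass L B D M lam Q2, Qclass L B D M lam Q3,
        Qclass L B D M lam Q4 & Qclass L B D M lam Q5] /\
      V = fun s => maxA a0 (fun a =>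
               clip (Q1 s a) (Num.max (Q2 s a) (Q3 s a)) (Num.min (Q4 s a) (Q5 s a))).

End Fun.

Definition is_cover (T : Type) (F : (T -> R) -> Prop) (eps : R) (n : nat)
  (C : 'I_n -> T -> R) : Prop :=
  forall f, F f -> exists i : 'I_n, forall t, `|f t - C i t| <= eps.

(* log N_eps(F) <= b  iff  there is an eps-cover of size n with log n <= b *)
Definition log_covering_le (T : Type) (F : (T -> R) -> Prop) (eps b : R) : Prop :=
  exists (n : nat) (C : 'I_n -> T -> R), is_cover F eps C /\ ln (n%:R : R) <= b.

End Defs.

(* Main.v *)
Require Import Defs.
From HB Require Import structures.
From mathcomp Require Import all_boot all_order all_algebra.
From mathcomp Require Import all_classical all_reals.
From mathcomp Require Import exp.
From mathcomp Require Import ring lra zify.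
Import Order.TTheory GRing.Theory Num.Theory.
Local Open Scope ring_scope.
Section Euc.
Context {R : realType} {I : finType}.
Implicit Types (x y : I -> R).

Definition sqn x : R := \sum_i x i ^+ 2.
Definition en x : R := Num.sqrt (sqn x).
Definition vsub x y : I -> R := fun i => x i - y i.
Definition vadd x y : I -> R := fun i => x i + y i.
Definition vscale (t : R) x : I -> R := fun i => t * x i.

Lemma sqn_ge0 x : 0 <= sqn x.
Proof. by apply: sumr_ge0 => i _; rewrite sqr_ge0. Qed.

Lemma en_ge0 x : 0 <= en x.
Proof. exact: sqrtr_ge0. Qed.

Lemma en_sqr x : en x ^+ 2 = sqn x.
Proof. by rewrite /en sqr_sqrtr // sqn_ge0. Qed.

Lemma lagrange x y :
  \sum_i \sum_j (x i * y j - x j * y i) ^+ 2 =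
  2 * (sqn x * sqn y - (\sum_i x i * y i) ^+ 2).
Proof.
have E1 : \sum_i \sum_j (x i * y j) ^+ 2 = sqn x * sqn y.
  rewrite /sqn mulr_suml; apply: eq_bigr => i _; rewrite mulr_sumr.
  by apply: eq_bigr => j _; rewrite exprMn.
have E2 : \sum_i \sum_j (x j * y i) ^+ 2 = sqn x * sqn y.
  rewrite exchange_big /=; exact: E1.
have E3 : \sum_i \sum_j (x i * y j) * (x j * y i) = (\sum_i x i * y i) ^+ 2.
  rewrite expr2 mulr_suml; apply: eq_bigr => i _; rewrite mulr_sumr.
  by apply: eq_bigr => j _; ring.
have -> : \sum_i \sum_j (x i * y j - x j * y i) ^+ 2 =
   \sum_i \sum_j (x i * y j) ^+ 2 + \sum_i \sum_j (x j * y i) ^+ 2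
   - 2 * \sum_i \sum_j (x i * y j) * (x j * y i).
  rewrite -big_split /= mulr_sumr -sumrB; apply: eq_bigr => i _.
  rewrite -big_split /= mulr_sumr -sumrB; apply: eq_bigr => j _.
  by rewrite sqrrB; ring.
rewrite E1 E2 E3; ring.
Qed.

Lemma CS x y : (\sum_i x i * y i) ^+ 2 <= sqn x * sqn y.
Proof.
have H := lagrange x y.
have : 0 <= \sum_i \sum_j (x i * y j - x j * y i) ^+ 2.
  by apply: sumr_ge0 => i _; apply: sumr_ge0 => j _; rewrite sqr_ge0.
rewrite H; lra.
Qed.

Lemma dot_le x y : `|\sum_i x i * y i| <= en x * en y.
Proof.
rewrite /en -sqrtrM ?sqn_ge0 // -sqrtr_sqr; apply: ler_wsqrtr; exact: CS.
Qed.

Lemma dot_le_sqn x y : \sum_i x i * y i <= en x * en y.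
Proof. exact: le_trans (ler_norm _) (dot_le x y). Qed.

Lemma en_add x y : en (vadd x y) <= en x + en y.
Proof.
have h0 : 0 <= en x + en y by rewrite addr_ge0 ?en_ge0.
rewrite -(ger0_norm h0) -sqrtr_sqr; apply: ler_wsqrtr.
have -> : sqn (vadd x y) = sqn x + 2 * (\sum_i x i * y i) + sqn y.
  rewrite /sqn /vadd mulr_sumr -!big_split /=; apply: eq_bigr => i _; ring.
have := dot_le_sqn x y; rewrite sqrrD !en_sqr => h; nra.
Qed.

Lemma en_scale t x : en (vscale t x) = `|t| * en x.
Proof.
rewrite /en /sqn /vscale.
have -> : \sum_i (t * x i) ^+ 2 = t ^+ 2 * \sum_i x i ^+ 2.
  by rewrite mulr_sumr; apply: eq_bigr => i _; rewrite exprMn.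
by rewrite sqrtrM ?sqr_ge0 // sqrtr_sqr.
Qed.

Lemma sqn_ext x y : x =1 y -> sqn x = sqn y.
Proof. by move=> h; apply: eq_bigr => i _; rewrite h. Qed.

Lemma en_ext x y : x =1 y -> en x = en y.
Proof. by move=> h; rewrite /en (@sqn_ext x y h). Qed.

Lemma en_sym x y : en (vsub x y) = en (vsub y x).
Proof.
rewrite -[en (vsub y x)]mul1r -(normrN1 R) -en_scale; apply: en_ext => i.
rewrite /vscale /vsub; ring.
Qed.

Lemma en_sub_ge x y : en x - en y <= en (vsub x y).
Proof.
have := en_add (vsub x y) y.
rewrite (@en_ext (vadd (vsub x y) y) x); last by move=> i; rewrite /vadd /vsub; ring.
lra.
Qed.

Lemma en_coord_le x i : `|x i| <= en x.
Proof.
rewrite /en -sqrtr_sqr; apply: ler_wsqrtr; rewrite /sqn (bigD1 i) //=.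
rewrite lerDl; apply: sumr_ge0 => j _; exact: sqr_ge0.
Qed.

End Euc.

Section Euc2.
Context {R : realType} {I : finType}.
Implicit Types (x y : I -> R).

Lemma en_add_ge x y : en x - en y <= en (vadd x y).
Proof.
have := en_add (vadd x y) (vscale (-1) y).
rewrite (@en_ext _ _ (vadd (vadd x y) (vscale (-1) y)) x); last first.
  by move=> i; rewrite /vadd /vscale; ring.
rewrite en_scale normrN1 mul1r; lra.
Qed.

Lemma en_sub_le x y : en (vsub x y) <= en x + en y.
Proof.
have := en_add x (vscale (-1) y).
rewrite (@en_ext _ _ (vadd x (vscale (-1) y)) (vsub x y)); last first.
  by move=> i; rewrite /vadd /vscale /vsub; ring.
by rewrite en_scale normrN1 mul1r.
Qed.

Lemma en0 : en (fun _ : I => (0 : R)) = 0.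
Proof.
rewrite /en /sqn (eq_bigr (fun _ => 0)); last by move=> i _; rewrite expr0n.
by rewrite big1 // sqrtr0.
Qed.
End Euc2.
Section Pack.
Variables (R : realType) (I : finType).
Local Notation en := (@en R I).
Local Notation vsub := (@vsub R I).

Lemma floor_box (h Rr z : R) : 0 < h -> 0 <= Rr -> `|z| <= Rr ->
  let K := (Num.trunc (Rr / h)).+1 in
  (0 <= Num.floor (z / h) + K%:Z)%R /\ (Num.floor (z / h) + K%:Z < (2 * K).+1%:Z)%R.
Proof.
move=> h0 R0 zR K.
have [t1 t2] := andP (truncn_itv (divr_ge0 R0 (ltW h0))).
rewrite -/K in t2.
have zb : - Rr <= z <= Rr by rewrite -ler_norml.
have [zb1 zb2] := andP zb.
have e1 : - K%:R <= z / h.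
  rewrite ler_pdivlMr // mulNr; apply: le_trans zb1.
  rewrite lerN2 -ler_pdivrMr //; exact: ltW.
have e2 : z / h < K%:R.
  apply: le_lt_trans t2; rewrite ler_pdivrMr // divfK ?gt_eqF //.
have f1 : (- (K%:Z) <= Num.floor (z / h))%R.
  by rewrite floor_ge_int rmorphN /=.
have f2 : (Num.floor (z / h) < K%:Z)%R.
  by rewrite floor_lt_int.
split; first by rewrite -lerBlDr sub0r.
move: f1 f2; lia.
Qed.

Lemma crude (T : finType) (q : T -> I -> R) (Rr s : R) :
  0 < s -> 0 <= Rr -> (forall k, en (q k) <= Rr) ->
  (forall k l, k != l -> s <= en (vsub (q k) (q l))) ->
  #|T|%:R <= (2 * Rr * (#|I|.+1)%:R / s + 3) ^+ #|I|.
Proof.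
move=> s0 R0 qR qs.
set n := #|I|.
set h := s / (n.+1)%:R.
have h0 : 0 < h by rewrite divr_gt0 // ltr0n.
set K := (Num.trunc (Rr / h)).+1.
pose f (k : T) : {ffun I -> 'I_(2 * K).+1} :=
  [ffun i => inord (absz (Num.floor (q k i / h) + K%:Z)%R)].
have qiR k i : `|q k i| <= Rr := le_trans (en_coord_le _ _) (qR k).
have finj : injective f.
  move=> k l fkl; apply/eqP; apply: contraT => nkl.
  have := qs k l nkl.
  suff : en (vsub (q k) (q l)) < s by move=> a b; have := lt_le_trans a b; rewrite ltxx.
  have dif i : `|q k i - q l i| <= h.
    have := congr1 (fun g : {ffun I -> 'I_(2 * K).+1} => nat_of_ord (g i)) fkl; rewrite /f !ffunE /=.
    have [a1 a2] := floor_box h Rr (q k i) h0 R0 (qiR k i).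
    have [b1 b2] := floor_box h Rr (q l i) h0 R0 (qiR l i).
    rewrite -/K in a1 a2 b1 b2.
    rewrite !inordK; first last.
    - by rewrite -ltz_nat gez0_abs.
    - by rewrite -ltz_nat gez0_abs.
    move=> /(congr1 Posz); rewrite !gez0_abs // => /addIr eqf.
    have [c1 c2] := andP (floor_itv (q k i / h)).
    have [d1 d2] := andP (floor_itv (q l i / h)).
    rewrite eqf in c1 c2.
    have : `|q k i / h - q l i / h| <= 1.
      rewrite ler_norml; rewrite intrD in c2 d2; apply/andP; split; lra.
    by rewrite -mulrBl normrM (gtr0_norm (_ : 0 < h^-1)) ?invr_gt0 // ler_pdivrMr // mul1r.
  have sq : sqn (vsub (q k) (q l)) <= h ^+ 2 *+ n.
    rewrite /sqn -sumr_const; apply: ler_sum => i _.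
    rewrite /vsub -real_normK ?num_real //.
    apply: lerXn2r; [by rewrite nnegrE normr_ge0 | by rewrite nnegrE ltW | exact: dif].
  have hs : h ^+ 2 *+ n < s ^+ 2.
    rewrite /h expr_div_n -mulr_natr mulrAC ltr_pdivrMr ?exprn_gt0 ?ltr0n //.
    rewrite ltr_pM2l ?exprn_gt0 // -natrX ltr_nat.
    by rewrite -addn1 sqrnD; lia.
  have H := le_lt_trans sq hs.
  have : Num.sqrt (sqn (vsub (q k) (q l))) < Num.sqrt (s ^+ 2).
    by rewrite ltr_sqrt ?exprn_gt0.
  by rewrite sqrtr_sqr gtr0_norm.
have := leq_card _ finj; rewrite card_ffun card_ord => cT.
apply: (le_trans (y := ((2 * K).+1)%:R ^+ n)).
  by rewrite -natrX ler_nat.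
apply: lerXn2r; first by rewrite nnegrE ler0n.
  by rewrite nnegrE; apply: addr_ge0 => //; rewrite divr_ge0 ?mulr_ge0 ?ler0n // ltW.
have [t1 t2] := andP (truncn_itv (divr_ge0 R0 (ltW h0))).
have -> : 2 * Rr * (n.+1)%:R / s = 2 * (Rr / h).
  rewrite /h invf_div; field; rewrite gt_eqF //.
rewrite /K -[(2 * _).+1]addn1 natrD natrM -addn1 natrD; lra.
Qed.
End Pack.

Lemma bernoulli (R : realType) (x : R) (j : nat) : 0 <= x -> 1 + j%:R * x <= (1 + x) ^+ j.
Proof.
move=> x0; elim: j => [|j IH]; first by rewrite mul0r addr0 expr0.
rewrite exprS -natr1 mulrDl mul1r.
have h1 : 0 <= j%:R * x by rewrite mulr_ge0 ?ler0n.
have : (1 + x) * (1 + j%:R * x) <= (1 + x) * (1 + x) ^+ j.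
  by rewrite ler_pM2l //; lra.
nra.
Qed.

Section Tensor.
Variables (R : realType) (I : finType) (N : nat) (p : 'I_N -> I -> R) (t : R).

Fixpoint Xs (s : seq 'I_N) : I -> R :=
  match s with
  | [::] => fun _ => 0
  | k :: s' => fun i => p k i + t * Xs s' i
  end.
End Tensor.
Arguments Xs {R I N} p t s.

Lemma packing (R : realType) (I : finType) (N : nat) (p : 'I_N -> I -> R) (r δ κ : R) :
  0 < r -> 0 < δ -> 1 < κ -> (forall k, en (p k) <= r) ->
  (forall k l, k != l -> δ < en (vsub (p k) (p l))) ->
  N%:R <= (1 + 2 * κ * r / δ) ^+ #|I|.
Proof.
move=> r0 d0 k1 pr ps.
set b := 1 + 2 * κ * r / δ.
have bm1 : b - 1 = 2 * κ * r / δ by rewrite /b; ring.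
have b1 : 1 < b.
  by rewrite -subr_gt0 bm1 divr_gt0 // mulr_gt0 // mulr_gt0 //; lra.
have b0 : 0 < b by lra.
set t := b^-1.
have t0 : 0 < t by rewrite invr_gt0.
have t1 : t < 1 by rewrite invf_lt1.
have tb : t * b = 1 by rewrite mulVf // gt_eqF.
set R' := r * b / (b - 1).
have R'0 : 0 <= R' by rewrite divr_ge0 ?mulr_ge0 //; lra.
have R'eq : r + t * R' = R'.
  rewrite /R' /t; field; apply/andP; split; rewrite gt_eqF //; lra.
have XR : forall s, en (Xs p t s) <= R'.
  elim=> [|k s IH] /=; first by rewrite en0.
  rewrite (@en_ext _ _ _ (vadd (p k) (vscale t (Xs p t s)))) //.
  apply: le_trans (en_add _ _) _; rewrite en_scale gtr0_norm //.
  rewrite -[X in _ <= X]R'eq; apply: lerD => //; rewrite ler_pM2l //.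
set γ := δ - δ / κ.
have γ0 : 0 < γ.
  rewrite /γ subr_gt0 ltr_pdivrMr; last lra.
  rewrite -subr_gt0 -[X in _ - X]mulr1 -mulrBr; apply: mulr_gt0 => //; lra.
have tR' : t * (R' + R') = δ / κ.
  rewrite /R' /t bm1; field; rewrite !gt_eqF //; lra.
have sep : forall j s s', size s = j.+1 -> size s' = j.+1 -> s != s' ->
    t ^+ j * γ <= en (vsub (Xs p t s) (Xs p t s')).
  elim=> [|j IH] [|k s] [|k' s'] //= [hs] [hs'] neq.
  - move: neq; case: s hs => // _; case: s' hs' => // _.
    rewrite eqseq_cons eqxx andbT => neq.
    rewrite expr0 mul1r.
    rewrite (@en_ext _ _ _ (vsub (p k) (p k'))); last first.
      by move=> i; rewrite /vsub /=; ring.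
    have := ps _ _ neq; rewrite /γ.
    have : 0 < δ / κ by rewrite divr_gt0 //; lra.
    lra.
  - rewrite (@en_ext _ _ _ (vadd (vsub (p k) (p k')) (vscale t (vsub (Xs p t s) (Xs p t s'))))); last first.
      by move=> i; rewrite /vsub /vadd /vscale /=; ring.
    case: (eqVneq k k') => [ekk|nkk].
    + subst k'; move: neq; rewrite eqseq_cons eqxx /= => neq.
      rewrite (@en_ext _ _ _ (vscale t (vsub (Xs p t s) (Xs p t s')))); last first.
        by move=> i; rewrite /vsub /vadd /vscale /=; ring.
      rewrite en_scale gtr0_norm // exprS -mulrA ler_pM2l //; exact: IH.
    + apply: le_trans (en_add_ge _ _).
      rewrite en_scale gtr0_norm //.
      have h1 := ps _ _ nkk.
      have h2 : t * en (vsub (Xs p t s) (Xs p t s')) <= δ / κ.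
        rewrite -tR' ler_pM2l //; apply: le_trans (en_sub_le _ _) _.
        by apply: lerD; apply: XR.
      have h3 : t ^+ j.+1 <= 1 by rewrite exprn_ile1 // ltW.
      have h4 : t ^+ j.+1 * γ <= γ by rewrite ler_piMl // ltW.
      rewrite /γ in h4 *; lra.
set n := #|I|.
set K0 := 2 * R' * (n.+1)%:R / γ + 3.
have KK0 : 0 <= 2 * R' * (n.+1)%:R / γ.
  by apply: divr_ge0 (ltW γ0); apply: mulr_ge0 (ler0n _ _); apply: mulr_ge0 R'0.
have K01 : 1 <= K0.
  rewrite /K0; move: KK0.
  lra.
have main : forall j : nat, (N ^ j.+1)%:R <= (b ^+ n) ^+ j * K0 ^+ n.
  move=> j.
  have := @crude R I ((j.+1).-tuple 'I_N) (fun u => Xs p t (tval u)) R' (t ^+ j * γ).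
  rewrite card_tuple card_ord => H.
  apply: le_trans (H _ R'0 _ _) _.
  - by rewrite mulr_gt0 // exprn_gt0.
  - by move=> u; apply: XR.
  - by move=> u u' nuu; apply: sep; rewrite ?size_tuple //.
  rewrite -exprM mulnC exprM -exprMn.
  apply: lerXn2r.
  + rewrite nnegrE; apply: addr_ge0 => //.
    apply: divr_ge0; first by apply: mulr_ge0 (ler0n _ _); exact: mulr_ge0 R'0.
    exact: mulr_ge0 (exprn_ge0 _ (ltW t0)) (ltW γ0).
  + by rewrite nnegrE mulr_ge0 ?exprn_ge0 //; lra.
  have bj : 1 <= b ^+ j by rewrite exprn_ege1 // ltW.
  have -> : 2 * R' * (n.+1)%:R / (t ^+ j * γ) = b ^+ j * (2 * R' * (n.+1)%:R / γ).
    rewrite /t exprVn; field; rewrite ?gt_eqF ?exprn_gt0 //.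
  rewrite /K0 mulrDr.
  move: KK0 bj; nra.
rewrite leNgt; apply/negP; rewrite -/n => Nlt.
set c := b ^+ n in Nlt *.
have c1 : 1 <= c by rewrite exprn_ege1 // ltW.
have N0 : 0 < N%:R :> R by apply: le_lt_trans Nlt; lra.
set q := N%:R / c.
have q1 : 1 < q by rewrite /q ltr_pdivlMr ?mul1r //; lra.
have q10 : 0 < q - 1 by lra.
set j := (Num.trunc (K0 ^+ n / (q - 1))).+1.
have := main j.
rewrite expnS natrM natrX.
have -> : N%:R = q * c by rewrite /q divfK // gt_eqF //; lra.
rewrite exprMn.
have cj : 0 < c ^+ j by rewrite exprn_gt0 //; lra.
have hj : K0 ^+ n < j%:R * (q - 1).
  rewrite -ltr_pdivrMr; last lra.
  have Kn0 : 0 <= K0 ^+ n / (q - 1) by apply: divr_ge0 (ltW q10); apply: exprn_ge0; lra.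
  by have [_ ->] := andP (truncn_itv Kn0).
have := @bernoulli _ (q - 1) j (ltW q10).
rewrite [1 + (q - 1)]addrC subrK => bq.
move=> H.
have : c ^+ j * q ^+ j <= c ^+ j * K0 ^+ n.
  apply: le_trans H.
  have qc1 : 1 <= q * c by rewrite -[1]mulr1 ler_pM //; lra.
  rewrite [q ^+ j * _]mulrC -[X in X <= _]mul1r; apply: ler_wpM2r => //.
  by rewrite mulr_ge0 ?exprn_ge0 //; lra.
rewrite ler_pM2l // => H2.
have : 1 + j%:R * (q - 1) <= K0 ^+ n by apply: le_trans bq H2.
lra.
Qed.

Lemma net_exists (R : realType) (I : finType) (r δ κ : R) :
  0 <= r -> 0 < δ -> 1 < κ ->
  exists N (c : 'I_N -> I -> R), (0 < N)%N /\ N%:R <= (1 + 2 * κ * r / δ) ^+ #|I| /\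
    (forall x, en x <= r -> exists k, en (vsub x (c k)) <= δ).
Proof.
move=> r0 d0 k1.
have [->|rpos] := eqVneq r 0.
  exists 1%N, (fun _ _ => 0); split=> //; split.
    by rewrite mulr0 mul0r addr0 expr1n.
  move=> x xr; exists ord0.
  rewrite (@en_ext _ _ _ x); last by move=> i; rewrite /vsub subr0.
  exact: le_trans xr (ltW d0).
have r0' : 0 < r by rewrite lt_def rpos.
set B := (1 + 2 * κ * r / δ) ^+ #|I|.
have B0 : 0 <= B.
  by rewrite exprn_ge0 // addr_ge0 // divr_ge0 ?mulr_ge0 //; lra.
pose P N := exists p : 'I_N -> I -> R,
  (forall k, en (p k) <= r) /\ (forall k l, k != l -> δ < en (vsub (p k) (p l))).
have P1 : P 1%N.
  exists (fun _ _ => 0); split; first by move=> k; rewrite en0 ltW.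
  by move=> k l; rewrite (ord1 k) (ord1 l) eqxx.
have exP : exists N, `[< P N >] by exists 1%N; apply/asboolP.
have ubP : forall N, `[< P N >] -> (N <= Num.trunc B)%N.
  move=> N /asboolP [p [pr ps]]; rewrite truncn_ge_nat //.
  exact: packing pr ps.
case: (ex_maxnP exP ubP) => N /asboolP [p [pr ps]] Nmax.
exists N, p; split.
  by apply: Nmax; apply/asboolP.
split; first exact: packing pr ps.
move=> x xr.
case: (pselect (exists k, en (vsub x (p k)) <= δ)) => // nex.
have far : forall k, δ < en (vsub x (p k)).
  move=> k; rewrite ltNge; apply/negP => h; apply: nex; by exists k.
suff : P N.+1 by move=> /asboolP /Nmax; rewrite ltnn.
exists (fun k => if unlift ord_max k is Some k' then p k' else x); split.
  by move=> k; case: (unliftP ord_max k) => [k'|] _.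
move=> k l; case: (unliftP ord_max k) => [k'|] ->; case: (unliftP ord_max l) => [l'|] -> //.
- move=> nkl; apply: ps; apply: contra nkl => /eqP ->; by [].
- by move=> _; rewrite en_sym.
- by rewrite eqxx.
Qed.

Section Mat.
Context {R : realType} {d : nat}.
Implicit Types (x y z : 'cV[R]_d) (M : 'M[R]_d).

Definition cf x : 'I_d -> R := fun i => x i ord0.
Definition bil M x y : R := (x^T *m M *m y) ord0 ord0.
Definition mf M : 'I_d * 'I_d -> R := fun ij => M ij.1 ij.2.

Lemma dotE (u v : 'cV[R]_d) : (u^T *m v) ord0 ord0 = \sum_i u i ord0 * v i ord0.
Proof. by rewrite !mxE; apply: eq_bigr => i _; rewrite !mxE. Qed.

Lemma bilE M x y : bil M x y = \sum_i \sum_j x i ord0 * M i j * y j ord0.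
Proof.
rewrite /bil mxE exchange_big /=; apply: eq_bigr => j _.
rewrite mxE mulr_suml; apply: eq_bigr => i _; by rewrite !mxE.
Qed.

Lemma bil_sym M x y : M^T = M -> bil M x y = bil M y x.
Proof.
move=> sM; rewrite /bil -[in RHS]sM.
have -> : (y^T *m M^T *m x) = (x^T *m M *m y)^T by rewrite !trmx_mul trmxK mulmxA.
by rewrite [RHS]mxE.
Qed.

Lemma bilDl M x y z : bil M (x + y) z = bil M x z + bil M y z.
Proof. by rewrite /bil linearD /= !mulmxDl mxE. Qed.

Lemma bilDr M x y z : bil M z (x + y) = bil M z x + bil M z y.
Proof. by rewrite /bil mulmxDr mxE. Qed.

Lemma bilZl M (a : R) x y : bil M (a *: x) y = a * bil M x y.
Proof. by rewrite /bil linearZ /= -!scalemxAl mxE. Qed.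

Lemma bilZr M (a : R) x y : bil M x (a *: y) = a * bil M x y.
Proof. by rewrite /bil -!scalemxAr mxE. Qed.

Lemma qformE M x : qform M x = bil M x x.
Proof. by []. Qed.

Lemma psd_cs M x y : M^T = M -> (forall z, 0 <= bil M z z) ->
  bil M x y ^+ 2 <= bil M x x * bil M y y.
Proof.
move=> sM psd.
have f t : 0 <= bil M x x + 2 * t * bil M x y + t ^+ 2 * bil M y y.
  have := psd (x + t *: y).
  rewrite bilDl !bilDr !bilZl !bilZr (bil_sym _ y x sM); nra.
have c0 := psd y.
have [cpos|] := ltrP 0 (bil M y y).
  have := f (- (bil M x y / bil M y y)).
  set a := bil M x x; set b := bil M x y; set c := bil M y y => h.
  have : 0 <= c * (a + 2 * - (b / c) * b + (- (b / c)) ^+ 2 * c).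
    by rewrite mulr_ge0 // ltW.
  have -> : c * (a + 2 * - (b / c) * b + (- (b / c)) ^+ 2 * c) = c * a - b ^+ 2.
    by field; rewrite gt_eqF.
  lra.
move=> cle; have c00 : bil M y y = 0 by apply/eqP; rewrite eq_le cle c0.
rewrite c00 mulr0.
have [b0|bn0] := eqVneq (bil M x y) 0; first by rewrite b0 expr0n.
have := f (- (bil M x x + 1) / (2 * bil M x y)).
rewrite c00 mulr0 addr0.
have -> : 2 * (- (bil M x x + 1) / (2 * bil M x y)) * bil M x y = - (bil M x x + 1).
  by field; rewrite bn0.
lra.
Qed.

Lemma bil_le_F M x : `|bil M x x| <= en (mf M) * sqn (cf x).
Proof.
have -> : bil M x x = \sum_(p : 'I_d * 'I_d) (x p.1 ord0 * x p.2 ord0) * mf M p.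
  rewrite bilE -(pair_bigA _ (fun i j => (x i ord0 * x j ord0) * mf M (i, j))) /=.
  apply: eq_bigr => i _; apply: eq_bigr => j _; rewrite /mf /=; ring.
apply: le_trans (dot_le _ _) _.
suff -> : en (fun p : 'I_d * 'I_d => x p.1 ord0 * x p.2 ord0) = sqn (cf x) by rewrite mulrC.
rewrite /en.
have -> : sqn (fun p : 'I_d * 'I_d => x p.1 ord0 * x p.2 ord0) = sqn (cf x) ^+ 2.
  rewrite /sqn expr2 mulr_suml -(pair_bigA _ (fun i j => (x i ord0 * x j ord0) ^+ 2)) /=.
  apply: eq_bigr => i _; rewrite mulr_sumr; apply: eq_bigr => j _; rewrite /cf; ring.
by rewrite sqrtr_sqr ger0_norm // sqn_ge0.
Qed.

Lemma Mx_le M y : sqn (cf (M *m y)) <= en (mf M) ^+ 2 * sqn (cf y).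
Proof.
rewrite en_sqr /sqn /mf -(pair_bigA _ (fun i j => M (i, j).1 (i, j).2 ^+ 2)) /=.
rewrite mulr_suml; apply: ler_sum => i _.
rewrite /cf mxE; exact: (CS (fun j => M i j) (fun j => y j ord0)).
Qed.

Lemma cf_eq0 x : sqn (cf x) = 0 -> x = 0.
Proof.
move=> /eqP; rewrite psumr_eq0 => [/allP h|i _]; last exact: sqr_ge0.
apply/matrixP => i j; rewrite (ord1 j) mxE.
have := h i (mem_index_enum _); rewrite /cf sqrf_eq0 => /eqP //.
Qed.

Lemma cf_gt0 x : x != 0 -> 0 < sqn (cf x).
Proof.
move=> nx; rewrite lt_def sqn_ge0 andbT; apply: contra nx => /eqP h.
by rewrite (cf_eq0 x h).
Qed.
End Mat.

Section Eig.
Context {R : realType} {d : nat}.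
Implicit Types (x y z : 'cV[R]_d) (M : 'M[R]_d).

Lemma posdef_unit {Lam : 'M[R]_d} : posdef Lam -> Lam \in unitmx.
Proof.
move=> [sL pL]; rewrite unitmxE unitfE; apply/negP => /det0P [v nv vL].
have := pL v^T; rewrite trmx_eq0 => /(_ nv).
by rewrite /qform trmxK vL mul0mx mxE ltxx.
Qed.

Lemma bil_scalar (mu : R) z : bil (mu%:M) z z = mu * sqn (cf z).
Proof. by rewrite /bil mul_mx_scalar -scalemxAl mxE dotE. Qed.

Lemma inv_sym {Lam : 'M[R]_d} : posdef Lam -> (invmx Lam)^T = invmx Lam.
Proof. by move=> [sL _]; rewrite trmx_inv sL. Qed.

Lemma inv_psd {Lam : 'M[R]_d} : posdef Lam -> forall x, 0 <= bil (invmx Lam) x x.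
Proof.
move=> pd x; have uL := posdef_unit pd; have sC := inv_sym pd.
have [_ pL] := pd.
have -> : bil (invmx Lam) x x = bil Lam (invmx Lam *m x) (invmx Lam *m x).
  rewrite /bil trmx_mul sC !mulmxA -[x^T *m invmx Lam *m Lam]mulmxA mulVmx //.
  by rewrite mulmx1.
have [->|nz] := eqVneq (invmx Lam *m x) 0.
  by rewrite /bil mulmx0 mxE.
exact: ltW (pL _ nz).
Qed.

Lemma qform_inv_le (Lam : 'M[R]_d) (lam : R) : 0 < lam -> posdef Lam ->
  lambda_min_ge Lam lam -> forall x, bil (invmx Lam) x x <= sqn (cf x) / lam.
Proof.
move=> lam0 pd lmin x.
have uL := posdef_unit pd; have sC := inv_sym pd; have psdC := inv_psd pd.
set C := invmx Lam in sC psdC *.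
have [->|nx] := eqVneq x 0.
  by rewrite /bil mulmx0 mxE /sqn /cf big1 ?mul0r // => i _; rewrite mxE expr0n.
pose E : set R := fun r => exists z, z != 0 /\ r = bil C z z / sqn (cf z).
have Ex : E (bil C x x / sqn (cf x)) by exists x.
have E0 : (E !=set0)%classic by exists (bil C x x / sqn (cf x)).
have Eub : ubound E (en (mf C)).
  move=> r [z [nz ->]]; rewrite ler_pdivrMr ?cf_gt0 //.
  exact: le_trans (ler_norm _) (bil_le_F _ _).
have hs : has_sup E by split => //; exists (en (mf C)).
set mu := sup E.
have Emu : forall z, bil C z z <= mu * sqn (cf z).
  move=> z; have [->|nz] := eqVneq z 0.
    by rewrite /bil mulmx0 mxE /sqn /cf big1 ?mulr0 // => i _; rewrite mxE expr0n.
  rewrite -ler_pdivrMr ?cf_gt0 //; apply: sup_upper_bound => //; by exists z.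
have mu0 : 0 <= mu.
  apply: le_trans (sup_upper_bound hs Ex); apply: divr_ge0; [exact: psdC | exact: sqn_ge0].
suff : mu <= lam^-1.
  move=> h; apply: le_trans (Emu x) _; rewrite mulrC ler_pM2l ?cf_gt0 //.
set Emat := mu%:M - C.
have sE : Emat^T = Emat by rewrite /Emat linearB /= tr_scalar_mx sC.
have bE : forall z, bil Emat z z = mu * sqn (cf z) - bil C z z.
  move=> z; rewrite -bil_scalar.
  by rewrite /bil /Emat mulmxBr mulmxBl !mxE.
have psdE : forall z, 0 <= bil Emat z z by move=> z; rewrite bE subr_ge0.
have detE : \det Emat == 0.
  apply: contraT => ndet.
  have uE : Emat \in unitmx by rewrite unitmxE unitfE.
  set F1 := en (mf (invmx Emat)); set F2 := en (mf Emat).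
  have key : forall z, sqn (cf z) <= F1 ^+ 2 * F2 * bil Emat z z.
    move=> z.
    have h1 : sqn (cf z) <= F1 ^+ 2 * sqn (cf (Emat *m z)).
      by have := Mx_le (invmx Emat) (Emat *m z); rewrite mulKmx.
    set S := sqn (cf (Emat *m z)).
    have S0 : 0 <= S by exact: sqn_ge0.
    have h2 : S <= F2 * bil Emat z z.
      have cs := psd_cs Emat (Emat *m z) z sE psdE.
      have e1 : bil Emat (Emat *m z) z = S.
        by rewrite /bil -mulmxA dotE.
      have e2 : bil Emat (Emat *m z) (Emat *m z) <= F2 * S.
        exact: le_trans (ler_norm _) (bil_le_F _ _).
      rewrite e1 in cs.
      have q0 := psdE z.
      have [Sp|] := ltrP 0 S.
        have : S * S <= S * (F2 * bil Emat z z).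
          apply: le_trans (_ : S ^+ 2 <= _); first by rewrite expr2.
          apply: le_trans cs _; rewrite [S * _]mulrA.
          by apply: ler_wpM2r => //; rewrite mulrC.
        by rewrite ler_pM2l.
      move=> Sle; have -> : S = 0 by apply/eqP; rewrite eq_le Sle S0.
      by rewrite mulr_ge0 // en_ge0.
    apply: le_trans h1 _; rewrite -mulrA ler_wpM2l ?exprn_ge0 ?en_ge0 //.
  set K := F1 ^+ 2 * F2.
  have K0 : 0 <= K by rewrite mulr_ge0 ?exprn_ge0 ?en_ge0.
  have : ubound E (mu - (K + 1)^-1).
    move=> r [z [nz ->]].
    have sz := cf_gt0 z nz.
    rewrite ler_pdivrMr // mulrBl.
    have := key z; rewrite bE => kz.
    have : sqn (cf z) / (K + 1) <= mu * sqn (cf z) - bil C z z.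
      rewrite ler_pdivrMr; last lra.
      have Q0 : 0 <= mu * sqn (cf z) - bil C z z by rewrite -bE.
      have kz' : sqn (cf z) <= K * (mu * sqn (cf z) - bil C z z) by [].
      rewrite mulrDr mulr1 mulrC; lra.
    by rewrite mulrC; lra.
  move=> /(ge_sup E0); rewrite -/mu.
  have : 0 < (K + 1)^-1 by rewrite invr_gt0; lra.
  lra.
move/det0P: detE => [v nv vE].
have vC : v *m C = mu *: v.
  by move: vE; rewrite /Emat mulmxBr mul_mx_scalar => /eqP; rewrite subr_eq0 => /eqP <-.
have vv : v = mu *: (v *m Lam).
  by rewrite -{1}(mulmx1 v) -(mulVmx uL) mulmxA -/C vC scalemxAl.
have mun : mu != 0 by apply: contra nv => /eqP m0; rewrite vv m0 scale0r.
have mup : 0 < mu by rewrite lt_def mun mu0.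
have ev : eigenvalue Lam mu^-1.
  apply/eigenvalueP; exists v => //.
  by rewrite {2}vv scalerA mulVf // scale1r.
have := lmin _ ev => h.
by rewrite -[mu]invrK lef_pV2 ?posrE ?invr_gt0.
Qed.
End Eig.

Section Lip.
Context {R : realType}.

Lemma min_mono (a b a' b' : R) : a <= a' -> b <= b' -> Num.min a b <= Num.min a' b'.
Proof. by move=> h1 h2; rewrite le_min !ge_min h1 h2 orbT. Qed.

Lemma max_mono (a b a' b' : R) : a <= a' -> b <= b' -> Num.max a b <= Num.max a' b'.
Proof. by move=> h1 h2; rewrite ge_max !le_max h1 h2 orbT. Qed.

Lemma min_shift (a b e : R) : Num.min a b + e = Num.min (a + e) (b + e).
Proof. by rewrite real_addr_minl ?num_real. Qed.

Lemma max_shift (a b e : R) : Num.max a b + e = Num.max (a + e) (b + e).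
Proof. by rewrite real_addr_maxl ?num_real. Qed.

Lemma abs_le_both (u v e : R) : u <= v + e -> v <= u + e -> `|u - v| <= e.
Proof. by move=> h1 h2; rewrite ler_norml; apply/andP; split; lra. Qed.

Lemma clip_one (x1 x2 x3 x4 x5 y1 y2 y3 y4 y5 e : R) :
  x1 <= y1 + e -> x2 <= y2 + e -> x3 <= y3 + e -> x4 <= y4 + e -> x5 <= y5 + e ->
  clip x1 (Num.max x2 x3) (Num.min x4 x5) <= clip y1 (Num.max y2 y3) (Num.min y4 y5) + e.
Proof.
move=> h1 h2 h3 h4 h5; rewrite /clip min_shift !max_shift min_shift.
by apply: min_mono; [apply: max_mono => //; apply: max_mono | apply: min_mono].
Qed.

Lemma abs_both {u v e : R} : `|u - v| <= e -> u <= v + e /\ v <= u + e.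
Proof. by rewrite ler_norml => /andP[h1 h2]; split; lra. Qed.

Lemma clip_lip (x1 x2 x3 x4 x5 y1 y2 y3 y4 y5 e : R) :
  `|x1 - y1| <= e -> `|x2 - y2| <= e -> `|x3 - y3| <= e -> `|x4 - y4| <= e -> `|x5 - y5| <= e ->
  `|clip x1 (Num.max x2 x3) (Num.min x4 x5) - clip y1 (Num.max y2 y3) (Num.min y4 y5)| <= e.
Proof.
move=> /abs_both[a1 b1] /abs_both[a2 b2] /abs_both[a3 b3] /abs_both[a4 b4] /abs_both[a5 b5].
by apply: abs_le_both; apply: clip_one.
Qed.

Lemma minM_lip (x y m e : R) : `|x - y| <= e -> `|Num.min x m - Num.min y m| <= e.
Proof.
move=> /abs_both[a b] ; apply: abs_le_both.
- rewrite min_shift; apply: min_mono => //; lra.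
- rewrite min_shift; apply: min_mono => //; lra.
Qed.

Lemma bigmax_ge (A : finType) (x0 : R) (F : A -> R) a :
  F a <= \big[Num.max/x0]_(b : A) F b.
Proof.
have : a \in index_enum A by rewrite mem_index_enum.
elim: (index_enum A) => //= b r IH; rewrite in_cons big_cons /= le_max.
by case/orP => [/eqP <-|/IH ->]; rewrite ?lexx ?orbT.
Qed.

Lemma maxA_one (A : finType) (a0 : A) (f g : A -> R) (e : R) :
  (forall a, f a <= g a + e) -> \big[Num.max/f a0]_(a : A) f a <= \big[Num.max/g a0]_(a : A) g a + e.
Proof.
move=> h; apply: (big_ind (fun x => x <= \big[Num.max/g a0]_(a : A) g a + e)).
- apply: le_trans (h a0) _; rewrite lerD2r; exact: bigmax_ge.
- by move=> x y hx hy; rewrite ge_max hx hy.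
- move=> a _; apply: le_trans (h a) _; rewrite lerD2r; exact: bigmax_ge.
Qed.

Lemma maxA_lip (A : finType) (a0 : A) (f g : A -> R) (e : R) :
  (forall a, `|f a - g a| <= e) ->
  `|\big[Num.max/f a0]_(a : A) f a - \big[Num.max/g a0]_(a : A) g a| <= e.
Proof.
move=> h; apply: abs_le_both; apply: maxA_one => a; by have [] := abs_both (h a).
Qed.

Lemma sqrt_lip_le (a b : R) : b <= a -> `|Num.sqrt a - Num.sqrt b| <= Num.sqrt `|a - b|.
Proof.
move=> ba.
have sab : Num.sqrt b <= Num.sqrt a by exact: ler_wsqrtr.
rewrite ger0_norm ?subr_ge0 // ger0_norm ?subr_ge0 //.
have [b0|bpos] := lerP b 0.
  rewrite (ler0_sqrtr b0) subr0; apply: ler_wsqrtr; lra.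
have sa0 := sqrtr_ge0 a; have sb0 := sqrtr_ge0 b.
have sd0 := sqrtr_ge0 (a - b).
suff : Num.sqrt a <= Num.sqrt b + Num.sqrt (a - b) by lra.
rewrite -(ler_pXn2r (n := 2)) ?nnegrE ?addr_ge0 // sqr_sqrtr; last lra.
rewrite sqrrD !sqr_sqrtr; [|lra|lra].
have : 0 <= Num.sqrt b * Num.sqrt (a - b) by rewrite mulr_ge0.
lra.
Qed.

Lemma sqrt_lip (a b : R) : `|Num.sqrt a - Num.sqrt b| <= Num.sqrt `|a - b|.
Proof.
case/orP: (le_total b a) => h; first exact: sqrt_lip_le.
by rewrite distrC [`|a - b|]distrC; apply: sqrt_lip_le.
Qed.
End Lip.

Section Frob.
Context {R : realType} {d : nat}.

Lemma sqn_delta (j : 'I_d) : sqn (cf (delta_mx j ord0 : 'cV[R]_d)) = 1.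
Proof.
rewrite /sqn /cf (bigD1 j) //= big1 ?addr0.
  by rewrite mxE !eqxx expr1n.
by move=> i nij; rewrite mxE (negbTE nij) /= expr0n.
Qed.

Lemma frob_bound (Am : 'M[R]_d) (c : R) : 0 <= c -> Am^T = Am ->
  (forall z, 0 <= bil Am z z) -> (forall z, bil Am z z <= c * sqn (cf z)) ->
  en (mf Am) <= Num.sqrt d%:R * c.
Proof.
move=> c0 sA psd ub.
have col_le : forall j : 'I_d, sqn (cf (Am *m delta_mx j ord0)) <= c ^+ 2.
  move=> j; set e := delta_mx j ord0 : 'cV[R]_d; set y := Am *m e.
  have cs := psd_cs Am y e sA psd.
  have e1 : bil Am y e = sqn (cf y) by rewrite /bil -mulmxA dotE.
  rewrite e1 in cs.
  have h1 := ub y; have h2 := ub e; rewrite sqn_delta mulr1 in h2.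
  set S := sqn (cf y) in cs h1 *.
  have S0 : 0 <= S by exact: sqn_ge0.
  have p0 := psd y; have p1 := psd e.
  have : S ^+ 2 <= c * S * c.
    apply: le_trans cs _; apply: ler_pM => //.
  case: (ltrP 0 S) => Sp.
    move=> h; nra.
  by move=> _; apply: le_trans Sp _; exact: sqr_ge0.
have sq : sqn (mf Am) <= c ^+ 2 *+ d.
  rewrite /sqn /mf -(pair_bigA _ (fun i j => Am (i, j).1 (i, j).2 ^+ 2)) /= exchange_big /=.
  rewrite -[d in X in _ <= X]card_ord -sumr_const; apply: ler_sum => j _.
  apply: le_trans _ (col_le j); rewrite le_eqVlt; apply/orP; left; apply/eqP.
  apply: eq_bigr => i _.
  by rewrite /cf -colE mxE.
rewrite /en -(ger0_norm c0) -sqrtr_sqr -sqrtrM ?ler0n //; apply: ler_wsqrtr.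
by rewrite mulr_natl.
Qed.
End Frob.

Definition Qc {R : realType} {S : Type} {A : finType} {d : nat} (phi : S -> A -> 'cV[R]_d)
  (M : R) (w : 'I_d -> R) (v : R) (Am : 'I_d * 'I_d -> R) (s : S) (a : A) : R :=
  Num.min (\sum_i w i * phi s a i ord0 + v
           + Num.sqrt (\sum_i \sum_j phi s a i ord0 * Am (i, j) * phi s a j ord0)) M.

Lemma bilZM {R : realType} {d : nat} (k : R) (Mx : 'M[R]_d) z : bil (k *: Mx) z z = k * bil Mx z z.
Proof. by rewrite /bil -scalemxAr -scalemxAl mxE. Qed.

Lemma approx {R : realType} {S : Type} {A : finType} {d : nat} (phi : S -> A -> 'cV[R]_d)
  (hphi : forall s a, norm2 (phi s a) <= 1) (L B D M lam : R) (hlam : 0 < lam)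
  (δw δv δA eps : R) (Nw Nv NA : nat)
  (cw : 'I_Nw -> 'I_d -> R) (cv : 'I_Nv -> 'I_1 -> R) (cA : 'I_NA -> 'I_d * 'I_d -> R)
  (hw : forall x, en x <= L -> exists k, en (vsub x (cw k)) <= δw)
  (hv : forall x, en x <= D / 2 -> exists k, en (vsub x (cv k)) <= δv)
  (hA : forall x, en x <= Num.sqrt d%:R * (B ^+ 2 / lam) -> exists k, en (vsub x (cA k)) <= δA)
  (hsum : δw + δv + Num.sqrt δA <= eps) (Q : S -> A -> R) :
  Qclass phi L B D M lam Q -> exists (kw : 'I_Nw) (kv : 'I_Nv) (kA : 'I_NA),
    forall s a, `|Q s a - Qc phi M (cw kw) (D / 2 + cv kv ord0) (cA kA) s a| <= eps.
Proof.
case=> w [v [β [Lam [nw /andP[b0 bB] /andP[v0 vD] [pd lm] ->]]]].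
have [kw hkw] := hw (cf w) nw.
pose xv := fun _ : 'I_1 => v - D / 2.
have xvE : en xv = `|v - D / 2|.
  by rewrite /en /sqn big_ord1 /xv sqrtr_sqr.
have [kv hkv] : exists k, en (vsub xv (cv k)) <= δv.
  apply: hv; rewrite xvE ler_norml; apply/andP; split; lra.
set C := invmx Lam.
set Am := β ^+ 2 *: C.
have sC : C^T = C := inv_sym pd.
have psdC := inv_psd pd.
have qC := qform_inv_le Lam lam hlam pd lm.
have bAm : forall z, bil Am z z = β ^+ 2 * bil C z z by move=> z; rewrite bilZM.
have B2 : β ^+ 2 <= B ^+ 2 by rewrite !expr2; apply: ler_pM.
have fA : en (mf Am) <= Num.sqrt d%:R * (B ^+ 2 / lam).
  apply: frob_bound.
  - by apply: divr_ge0; [apply: sqr_ge0 | exact: ltW].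
  - by rewrite /Am linearZ /= sC.
  - by move=> z; rewrite bAm mulr_ge0 ?exprn_ge0.
  - move=> z; rewrite bAm.
    have q0 := psdC z; have q1 := qC z.
    have s0 := sqn_ge0 (cf z).
    apply: le_trans (_ : β ^+ 2 * (sqn (cf z) / lam) <= _).
      by rewrite ler_wpM2l ?exprn_ge0.
    have -> : B ^+ 2 / lam * sqn (cf z) = B ^+ 2 * (sqn (cf z) / lam) by rewrite mulrAC -mulrA.
    apply: ler_wpM2r => //; apply: divr_ge0 => //; exact: ltW.
have [kA hkA] := hA _ fA.
exists kw, kv, kA => s a.
set φ := phi s a.
have nφ : en (cf φ) <= 1 := hphi s a.
have sφ : sqn (cf φ) <= 1.
  rewrite -en_sqr; have e0 := en_ge0 (cf φ).
  by rewrite expr2; nra.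
rewrite /Qfun /Qc -/φ; apply: minM_lip.
have h1 : `|(w^T *m φ) ord0 ord0 - \sum_i cw kw i * φ i ord0| <= δw.
  rewrite dotE -sumrB.
  have -> : \sum_i (w i ord0 * φ i ord0 - cw kw i * φ i ord0)
     = \sum_i vsub (cf w) (cw kw) i * cf φ i.
    by apply: eq_bigr => i _; rewrite /vsub /cf; ring.
  apply: le_trans (dot_le _ _) _.
  have := en_ge0 (vsub (cf w) (cw kw)); have := en_ge0 (cf φ); nra.
have h2 : `|v - (D / 2 + cv kv ord0)| <= δv.
  have := en_coord_le (vsub xv (cv kv)) ord0; rewrite /vsub /xv => h.
  have -> : v - (D / 2 + cv kv ord0) = v - D / 2 - cv kv ord0 by ring.
  exact: le_trans h hkv.
have dA0 : 0 <= δA by apply: le_trans hkA; exact: en_ge0.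
have h3 : `|β * Num.sqrt (qform C φ)
            - Num.sqrt (\sum_i \sum_j φ i ord0 * cA kA (i, j) * φ j ord0)| <= Num.sqrt δA.
  have eβ : β * Num.sqrt (qform C φ) = Num.sqrt (bil Am φ φ).
    by rewrite bAm sqrtrM ?exprn_ge0 // sqrtr_sqr ger0_norm.
  rewrite eβ; apply: le_trans (sqrt_lip _ _) _; apply: ler_wsqrtr.
  pose Dm := \matrix_(i, j) (mf Am (i, j) - cA kA (i, j)) : 'M[R]_d.
  have eD : bil Am φ φ - \sum_i \sum_j φ i ord0 * cA kA (i, j) * φ j ord0 = bil Dm φ φ.
    rewrite !bilE -sumrB; apply: eq_bigr => i _; rewrite -sumrB; apply: eq_bigr => j _.
    by rewrite /Dm /mf /= !mxE; ring.
  have mD : en (mf Dm) = en (vsub (mf Am) (cA kA)).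
    by apply: en_ext => p; rewrite /mf /vsub /Dm mxE -surjective_pairing.
  rewrite eD; apply: le_trans (bil_le_F _ _) _; rewrite mD.
  have := en_ge0 (vsub (mf Am) (cA kA)); have := sqn_ge0 (cf φ).
  rewrite -/(cf φ) in sφ; nra.
rewrite qformE in h3 *.
have [a1 b1] := abs_both h1; have [a2 b2] := abs_both h2; have [a3 b3] := abs_both h3.
apply: abs_le_both; lra.
Qed.

Theorem lemma18 (R : realType) (S : Type) (A : finType) (a0 : A) (d : nat)
  (phi : S -> A -> 'cV[R]_d)
  (hphi : forall s a, norm2 (phi s a) <= 1)
  (L B D M lam : R) (hL : 0 < L) (hB : 0 < B) (hD : 0 < D) (hM : 0 < M)
  (hlam : 0 < lam) :
  forall eps : R, 0 < eps ->
    log_covering_le (Vclass phi a0 L B D M lam) eps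
      (5 * d%:R * ln (1 + 8 * L / eps) + 5 * ln (1 + 8 * D / eps)
       + 5 * (d ^ 2)%:R
           * ln (1 + 8 * Num.sqrt (d%:R) * B ^+ 2 / (lam * eps ^+ 2))).
Proof.
move=> eps he.
set κ : R := 289%:R / 256%:R.
have k1 : 1 < κ by rewrite /κ ltr_pdivlMr ?ltr0n // mul1r ltr_nat.
have k0 : 0 < κ by lra.
set δw := κ * eps / 4; set δv := κ * eps / 8; set δA := κ * eps ^+ 2 / 4.
have dw0 : 0 < δw by apply: divr_gt0 => //; exact: mulr_gt0.
have dv0 : 0 < δv by apply: divr_gt0 => //; exact: mulr_gt0.
have dA0 : 0 < δA by apply: divr_gt0 => //; apply: mulr_gt0 => //; exact: exprn_gt0.
have [Nw [cw [Nw0 [Nwb hw]]]] := @net_exists R 'I_d L δw κ (ltW hL) dw0 k1.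
have [Nv [cv [Nv0 [Nvb hv]]]] := @net_exists R 'I_1 (D / 2) δv κ (ltW (divr_gt0 hD (ltr0Sn R 1))) dv0 k1.
set rA := Num.sqrt d%:R * (B ^+ 2 / lam).
have rA0 : 0 <= rA by rewrite mulr_ge0 ?sqrtr_ge0 // divr_ge0 ?sqr_ge0 ?ltW.
have [NA [cA [NA0 [NAb hA]]]] := @net_exists R ('I_d * 'I_d)%type rA δA κ rA0 dA0 k1.
have sA : Num.sqrt δA = 17%:R * eps / 32%:R.
  have -> : δA = (17%:R * eps / 32%:R) ^+ 2 by rewrite /δA /κ; field.
  by rewrite sqrtr_sqr ger0_norm // divr_ge0 ?mulr_ge0 ?ler0n ?ltW.
have hsum : δw + δv + Num.sqrt δA <= eps.
  rewrite sA /δw /δv /κ; lra.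
pose Tr := ('I_Nw * 'I_Nv * 'I_NA)%type.
pose Qt (τ : Tr) := Qc phi M (cw τ.1.1) (D / 2 + cv τ.1.2 ord0) (cA τ.2).
pose o (k : nat) : 'I_5 := inord k.
pose Cc (f : {ffun 'I_5 -> Tr}) (s : S) := Defs.maxA a0 (fun a =>
  clip (Qt (f (o 0%N)) s a) (Num.max (Qt (f (o 1%N)) s a) (Qt (f (o 2%N)) s a))
       (Num.min (Qt (f (o 3%N)) s a) (Qt (f (o 4%N)) s a))).
exists #|{ffun 'I_5 -> Tr}|, (fun i => Cc (enum_val i)); split.
  move=> V [Q1 [Q2 [Q3 [Q4 [Q5 [[c1 c2 c3 c4 c5] ->]]]]]].
  have ap := @approx R S A d phi hphi L B D M lam hlam δw δv δA eps Nw Nv NA cw cv cA hw hv hA hsum.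
  have [kw1 [kv1 [kA1 e1]]] := ap _ c1.
  have [kw2 [kv2 [kA2 e2]]] := ap _ c2.
  have [kw3 [kv3 [kA3 e3]]] := ap _ c3.
  have [kw4 [kv4 [kA4 e4]]] := ap _ c4.
  have [kw5 [kv5 [kA5 e5]]] := ap _ c5.
  pose f : {ffun 'I_5 -> Tr} := [ffun k : 'I_5 => nth (kw1, kv1, kA1)
     [:: (kw1, kv1, kA1); (kw2, kv2, kA2); (kw3, kv3, kA3); (kw4, kv4, kA4); (kw5, kv5, kA5)] k].
  exists (enum_rank f) => s; rewrite enum_rankK /Cc /Defs.maxA.
  apply: maxA_lip => a; rewrite /f /o !ffunE !inordK //=.
  by apply: clip_lip; [apply: e1 | apply: e2 | apply: e3 | apply: e4 | apply: e5].
have eA : (1 + 2 * κ * rA / δA) = 1 + 8 * Num.sqrt (d%:R) * B ^+ 2 / (lam * eps ^+ 2).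
  rewrite /rA /δA; field; rewrite ?gt_eqF //; lra.
have eW : (1 + 2 * κ * L / δw) = 1 + 8 * L / eps.
  rewrite /δw; field; rewrite ?gt_eqF //; lra.
have eV : (1 + 2 * κ * (D / 2) / δv) = 1 + 8 * D / eps.
  rewrite /δv; field; rewrite ?gt_eqF //; lra.
rewrite eA card_prod !card_ord in NAb.
rewrite eW card_ord in Nwb.
rewrite eV card_ord expr1 in Nvb.
set a := 1 + 8 * L / eps in Nwb *.
set b := 1 + 8 * D / eps in Nvb *.
set c := 1 + 8 * Num.sqrt (d%:R) * B ^+ 2 / (lam * eps ^+ 2) in NAb *.
have a1 : 1 <= a by rewrite /a lerDl; apply: divr_ge0; [rewrite mulr_ge0 // ltW | exact: ltW].
have b1 : 1 <= b by rewrite /b lerDl; apply: divr_ge0; [rewrite mulr_ge0 // ltW | exact: ltW].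
have c1 : 1 <= c.
  rewrite /c lerDl; apply: divr_ge0; last by apply: mulr_ge0; [exact: ltW | apply: exprn_ge0; exact: ltW].
  by apply: mulr_ge0; [apply: mulr_ge0 => //; exact: sqrtr_ge0 | exact: sqr_ge0].
have pw : 0 < Nw%:R :> R by rewrite ltr0n.
have pv : 0 < Nv%:R :> R by rewrite ltr0n.
have pA : 0 < NA%:R :> R by rewrite ltr0n.
have lw : ln (Nw%:R : R) <= d%:R * ln a.
  rewrite mulr_natl -lnXn; last lra.
  by rewrite ler_ln // posrE // exprn_gt0 //; lra.
have lv : ln (Nv%:R : R) <= ln b by rewrite ler_ln // posrE //; lra.
have lA : ln (NA%:R : R) <= (d ^ 2)%:R * ln c.
  rewrite mulr_natl -lnXn; last lra.
  by rewrite -mulnn ler_ln // posrE // exprn_gt0 //; lra.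
rewrite card_ffun !card_prod !card_ord natrX !natrM lnXn; last by rewrite !mulr_gt0.
rewrite !lnM ?posrE ?mulr_gt0 //.
rewrite ?mulr1 -[_ *+ 5]mulr_natl.
rewrite natrX expr2 in lA.
lra.
Qed.
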